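(* Let $\{(Q^{m,n}_{ij})_{i,j\in\mathbb{N}}\}$ be a discrete time Markov process. Suppose there exist $k_0\in\mathbb{N}$ and a sequence $(\lambda_n)$ with $0<\lambda_n<1$ for all $n$, satisfying $\sum_{n}\lambda_n=\infty$ and $\sum_{j=1}^n\frac{\prod_{k=1}^n(1-\lambda_k)}{1-\lambda_j}\to0$ as $n\to\infty$, such that $Q^{n-1,n}_{ik_0}\ge\lambda_n$ for all $i\in\mathbb{N}$ and all $n$ (for which $Q^{n-1,n}$ is defined). Then the Markov process satisfies the ergodic principle, i.e. $\lim_{n\to\infty}|Q^{m,n}_{ik}-Q^{m,n}_{jk}|=0$ for every $i,j,k,m$.
   Context: $\mathbb{N}=\{1,2,\dots\}$. A matrix $(Q_{ij})_{i,j\in\mathbb{N}}$ is stochastic if $Q_{ij}\ge0$ and $\sum_jQ_{ij}=1$ for every $i$. A discrete time Markov process is a family of stochastic matrices $\{(Q^{m,n}_{ij})_{i,j\in\mathbb{N}}\}$ indexed by integer times $m<n$, satisfying the Kolmogorov–Chapman equation $Q^{m,l}_{ij}=\sum_{k=1}^\infty Q^{m,n}_{ik}Q^{n,l}_{kj}$ for all $m<n<l$ and all $i,j$. *)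

(* Defs.v *)
From Stdlib Require Import Reals.
From Coquelicot Require Import Coquelicot.
Open Scope R_scope.

(* States: the paper's index set N = {1,2,...} is relabelled as nat = {0,1,...}
   (state i of the paper is state i-1 here).  Times: nonnegative integers. *)

(* A family Q m n i j of matrices indexed by times m < n. *)
Definition process := nat -> nat -> nat -> nat -> R.

Definition stochastic_family (Q : process) : Prop :=
  forall m n, (m < n)%nat ->
    (forall i j, 0 <= Q m n i j) /\ (forall i, is_series (fun j => Q m n i j) 1).

Definition kolmogorov_chapman (Q : process) : Prop :=
  forall m n l, (m < n)%nat -> (n < l)%nat ->
    forall i j, is_series (fun k => Q m n i k * Q n l k j) (Q m l i j).

Definition markov_process (Q : process) : Prop :=
  stochastic_family Q /\ kolmogorov_chapman Q.

Fixpoint prod_1_n (f : nat -> R) (n : nat) : R :=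
  match n with
  | O => 1
  | S n' => prod_1_n f n' * f (S n')
  end.

Definition ergodic_principle (Q : process) : Prop :=
  forall i j k m, is_lim_seq (fun n => Rabs (Q m n i k - Q m n j k)) 0.

(* Main.v *)
Require Import Defs.
From Stdlib Require Import Reals Lra Lia.
From Coquelicot Require Import Coquelicot.
Open Scope R_scope.

Lemma sum_n_nonneg (g : nat -> R) n : (forall l, 0 <= g l) -> 0 <= sum_n g n.
Proof.
  intros Hg. induction n. rewrite sum_O; auto.
  rewrite sum_Sn. change (plus (sum_n g n) (g (S n))) with (sum_n g n + g (S n)).
  specialize (Hg (S n)); lra.
Qed.

Lemma term_le_series (g : nat -> R) s k :
  (forall l, 0 <= g l) -> is_series g s -> g k <= s.
Proof.
  intros Hg Hs.
  assert (H1 : g k <= sum_n g k).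
  { destruct k. rewrite sum_O; lra.
    rewrite sum_Sn. change (plus (sum_n g k) (g (S k))) with (sum_n g k + g (S k)).
    pose proof (sum_n_nonneg g k Hg); lra. }
  assert (H2 : forall n, g k <= sum_n g (n + k)).
  { induction n. simpl; auto.
    replace (S n + k)%nat with (S (n + k)) by lia. rewrite sum_Sn.
    change (plus (sum_n g (n+k)) (g (S (n+k)))) with (sum_n g (n+k) + g (S (n+k))).
    specialize (Hg (S (n+k))); lra. }
  assert (Hl : is_lim_seq (sum_n g) s) by exact Hs.
  apply (is_lim_seq_incr_n _ k) in Hl.
  pose proof (is_lim_seq_le (fun _ => g k) _ (g k) s H2 (is_lim_seq_const _) Hl).
  simpl in H; auto.
Qed.

Lemma conv_bound (p f : nat -> R) (a c lam S : R) k0 :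
  (forall l, 0 <= p l) -> is_series p 1 -> (forall l, a <= f l <= a + c) ->
  lam <= p k0 -> 0 <= lam ->
  is_series (fun l => p l * f l) S ->
  lam * f k0 + (1-lam)*a <= S <= lam * f k0 + (1-lam)*(a+c).
Proof.
  intros Hp Hp1 Hf Hk Hl HS.
  assert (Ha := is_series_scal_r a _ _ Hp1).
  assert (Hac := is_series_scal_r (a+c) _ _ Hp1).
  pose proof (is_series_minus _ _ _ _ HS Ha) as D1.
  pose proof (is_series_minus _ _ _ _ Hac HS) as D2.
  assert (N1 : forall l, 0 <= plus (p l * f l) (opp (p l * a))).
  { intro l; specialize (Hp l); specialize (Hf l).
    change (0 <= p l * f l - p l * a).
    rewrite <- Rmult_minus_distr_l. apply Rmult_le_pos; lra. }
  assert (N2 : forall l, 0 <= plus (p l * (a+c)) (opp (p l * f l))).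
  { intro l; specialize (Hp l); specialize (Hf l).
    change (0 <= p l * (a+c) - p l * f l).
    rewrite <- Rmult_minus_distr_l. apply Rmult_le_pos; lra. }
  pose proof (term_le_series _ _ k0 N1 D1) as E1.
  pose proof (term_le_series _ _ k0 N2 D2) as E2.
  change (plus (p k0 * f k0) (opp (p k0 * a)) <= plus S (opp (1 * a))) in E1.
  change (p k0 * f k0 - p k0 * a <= S - 1 * a) in E1.
  change (p k0 * (a+c) - p k0 * f k0 <= 1 * (a+c) - S) in E2.
  specialize (Hf k0). split; nra.
Qed.
Fixpoint Pp (lam : nat -> R) (m d : nat) : R :=
  match d with O => 1 | S d' => (1 - lam (S m)) * Pp lam (S m) d' end.

Lemma band (Q : process) (k0 : nat) (lambda : nat -> R) k :
  markov_process Q ->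
  (forall n, (1 <= n)%nat -> 0 < lambda n < 1) ->
  (forall n i, (1 <= n)%nat -> lambda n <= Q (n - 1)%nat n i k0) ->
  forall d m, exists a, forall i, a <= Q m (m+1+d)%nat i k <= a + Pp lambda m d.
Proof.
  intros [HS HKC] Hl HQ d. induction d as [|d IH]; intro m.
  - exists 0. intro i. destruct (HS m (m+1+0)%nat ltac:(lia)) as [H0 H1].
    pose proof (H0 i k). pose proof (term_le_series (fun j => Q m (m+1+0)%nat i j) 1 k (H0 i) (H1 i)).
    simpl Pp. simpl in *. lra.
  - destruct (IH (S m)) as [a Ha].
    set (lm := lambda (S m)).
    assert (Hlm : 0 < lm < 1) by (apply Hl; lia).
    exists (lm * Q (S m) (S m + 1 + d)%nat k0 k + (1 - lm) * a).
    intro i.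
    destruct (HS m (S m) ltac:(lia)) as [H0 H1].
    pose proof (HKC m (S m) (m + 1 + S d)%nat ltac:(lia) ltac:(lia) i k) as HK.
    replace (m + 1 + S d)%nat with (S m + 1 + d)%nat in * by lia.
    assert (Hk0 : lm <= Q m (S m) i k0).
    { unfold lm. pose proof (HQ (S m) i ltac:(lia)) as X. replace (S m - 1)%nat with m in X by lia. exact X. }
    pose proof (conv_bound (fun l => Q m (S m) i l) (fun l => Q (S m) (S m + 1 + d)%nat l k)
      a (Pp lambda (S m) d) lm _ k0 (H0 i) (H1 i) Ha Hk0 ltac:(lra) HK) as B.
    simpl Pp. fold lm. split; [lra|].
    replace (lm * Q (S m) (S m + 1 + d)%nat k0 k + (1 - lm) * a + (1 - lm) * Pp lambda (S m) d)
      with (lm * Q (S m) (S m + 1 + d)%nat k0 k + (1 - lm) * (a + Pp lambda (S m) d)) by ring.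
    lra.
Qed.

Lemma Pp_bound (lambda : nat -> R) :
  (forall n, (1 <= n)%nat -> 0 < lambda n < 1) ->
  forall d m, 0 <= Pp lambda m d <= exp (- (sum_n_m lambda 1 (m + d) - sum_n_m lambda 1 m)).
Proof.
  intros Hl d. induction d as [|d IH]; intro m.
  - simpl. replace (m+0)%nat with m by lia. rewrite Rminus_diag, Ropp_0, exp_0. lra.
  - simpl. destruct (IH (S m)) as [A B].
    assert (Hlm : 0 < lambda (S m) < 1) by (apply Hl; lia).
    replace (m + S d)%nat with (S m + d)%nat by lia.
    rewrite (sum_n_Sm lambda 1 m) in B by lia.
    change (plus (sum_n_m lambda 1 m) (lambda (S m))) with (sum_n_m lambda 1 m + lambda (S m)) in B.
    replace (- (sum_n_m lambda 1 (S m + d) - sum_n_m lambda 1 m))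
      with (- lambda (S m) + - (sum_n_m lambda 1 (S m + d) - (sum_n_m lambda 1 m + lambda (S m)))) by ring.
    rewrite exp_plus.
    pose proof (exp_ineq1_le (- lambda (S m))).
    split. apply Rmult_le_pos; lra.
    apply Rmult_le_compat; lra.
Qed.

Lemma x (lambda : nat -> R) m :
  is_lim_seq (fun N => sum_n_m lambda 1 N) p_infty ->
  is_lim_seq (fun n => exp (- (sum_n_m lambda 1 (m + n) - sum_n_m lambda 1 m))) 0.
Proof.
  intros H.
  apply (is_lim_seq_incr_n _ m) in H.
  assert (H2 : is_lim_seq (fun n => sum_n_m lambda 1 (m + n) - sum_n_m lambda 1 m) p_infty).
  { eapply is_lim_seq_minus. eapply is_lim_seq_ext; [|exact H]. intro n; simpl. f_equal; lia.
    apply is_lim_seq_const. compute. reflexivity. }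
  apply is_lim_seq_opp in H2. simpl in H2.
  eapply filterlim_comp. exact H2. exact is_lim_exp_m.
Qed.

Theorem theorem3p3 (Q : process) (k0 : nat) (lambda : nat -> R) :
  markov_process Q ->
  (forall n, (1 <= n)%nat -> 0 < lambda n < 1) ->
  is_lim_seq (fun N => sum_n_m lambda 1 N) p_infty ->
  is_lim_seq
    (fun n => sum_n_m (fun j => prod_1_n (fun k => 1 - lambda k) n / (1 - lambda j)) 1 n)
    0 ->
  (forall n i, (1 <= n)%nat -> lambda n <= Q (n - 1)%nat n i k0) ->
  ergodic_principle Q.
Proof.
  intros HM Hl Hsum _ HQ i j k m.
  apply (is_lim_seq_incr_n _ (m + 1)).
  apply (is_lim_seq_le_le (fun _ => 0) _
    (fun n => exp (- (sum_n_m lambda 1 (m + n) - sum_n_m lambda 1 m)))).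
  - intro n. destruct (band Q k0 lambda k HM Hl HQ n m) as [a Ha].
    destruct (Pp_bound lambda Hl n m) as [_ B].
    replace (n + (m + 1))%nat with (m + 1 + n)%nat by lia.
    pose proof (Ha i); pose proof (Ha j).
    split. apply Rabs_pos.
    unfold Rabs; destruct Rcase_abs; lra.
  - apply is_lim_seq_const.
  - apply x; auto.
Qed.
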